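(* Let $0<q<1$, $I=[0,b)$ with $0<b\le\infty$, and let $u_0:I\to\mathbb{R}$ be continuous with $1-(1-q)tu_0(t)>0$ and $1+(1-q)tu_0(qt)>0$ for all $t\in I$. Put $$V(x)=\partial_qu_0(x)+u_0(x)u_0(qx),\qquad x\in I\setminus\{0\}.$$ Then for all constants $D,F\in\mathbb{R}$ the function $$\psi(x)=\exp\Big(-\frac{1}{1-q}\int_0^x\frac{\ln(1-(1-q)tu_0(t))}{t}d_qt\Big)\Big[D+F\int_0^x\frac{1}{1-(1-q)tu_0(t)}\exp\Big(\frac{1}{1-q}\int_0^t\frac1s\ln\frac{1-(1-q)su_0(s)}{1+(1-q)su_0(qs)}d_qs\Big)d_qt\Big]$$ solves the $q$-difference Schrödinger equation $-\partial_q^2\psi(x)+V(x)\psi(x)=0$ on $I\setminus\{0\}$ (here $\partial_q^2\psi$ is computed by first taking $\partial_q\psi$ on $I\setminus\{0\}$ and extending it by continuity to $0$, where it exists), with $\psi(0)=D$.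
   Context: $\partial_q f(x)=\dfrac{f(x)-f(qx)}{(1-q)x}$ for $x\neq0$; $\int_0^x f(t)\,d_qt=\sum_{n\ge0}(1-q)q^nx\,f(q^nx)$ (Jackson $q$-integral). *)

(* Defs.v *)
From Stdlib Require Import Reals.
From Coquelicot Require Import Coquelicot.
Open Scope R_scope.

Definition dq (q : R) (f : R -> R) (x : R) : R :=
  (f x - f (q * x)) / ((1 - q) * x).

Definition jackson (q : R) (f : R -> R) (x : R) : R :=
  Series (fun n : nat => (1 - q) * q ^ n * x * f (q ^ n * x)).

Definition inI (b : Rbar) (t : R) : Prop := 0 <= t /\ Rbar_lt t b.

Definition Vpot (q : R) (u0 : R -> R) (x : R) : R :=
  dq q u0 x + u0 x * u0 (q * x).

Definition psi (q : R) (u0 : R -> R) (D F : R) (x : R) : R :=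
  exp (- (1 / (1 - q)) *
       jackson q (fun t => ln (1 - (1 - q) * t * u0 t) / t) x) *
  (D + F * jackson q
     (fun t => 1 / (1 - (1 - q) * t * u0 t) *
        exp (1 / (1 - q) *
             jackson q (fun s => 1 / s *
               ln ((1 - (1 - q) * s * u0 s) / (1 + (1 - q) * s * u0 (q * s)))) t))
     x).

(* Main.v *)
Require Import Defs.
From Stdlib Require Import Reals Lra Lia.
From Coquelicot Require Import Coquelicot.
Open Scope R_scope.

Lemma gb (q:R) (t: nat->R): 0<q<1 ->
  (exists N C, forall n, (N<=n)%nat -> Rabs (t n) <= C*q^n) -> ex_series t.
Proof.
  intros hq [N [C H]].
  apply (proj2 (@ex_series_incr_n _ R_NormedModule t N)).
  apply (@ex_series_le R_AbsRing R_CompleteNormedModule) with (fun k => (C*q^N)*q^k).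
  - intros k. change (norm (t (N+k)%nat)) with (Rabs (t (N+k)%nat)).
    rewrite Rmult_assoc, <- pow_add. apply H. lia.
  - apply (ex_series_scal_l (C*q^N) (fun k => q^k)).
    exists (/(1-q)). apply is_series_geom. rewrite Rabs_pos_eq; lra.
Qed.

Lemma tailb (q D:R) (s: nat->R): 0<q<1 -> (forall k, Rabs (s k) <= D*q^k) ->
  Rabs (Series s) <= D/(1-q).
Proof.
  intros hq H.
  assert (G: is_series (fun k => D*q^k) (D*/(1-q))).
  { apply (is_series_scal_l D (fun k => q^k)). apply is_series_geom. rewrite Rabs_pos_eq; lra. }
  assert (E: ex_series (fun k => Rabs (s k))).
  { apply (@ex_series_le R_AbsRing R_CompleteNormedModule) with (fun k => D*q^k). intros k. change (norm (Rabs (s k))) with (Rabs (Rabs (s k))).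
    rewrite Rabs_Rabsolu. apply H. eexists; eauto. }
  eapply Rle_trans. apply Series_Rabs; auto.
  eapply Rle_trans. apply Series_le with (b := fun k => D*q^k).
  intros n; split; [apply Rabs_pos| apply H]. eexists; eauto.
  rewrite (is_series_unique _ _ G). unfold Rdiv. lra.
Qed.

Lemma lnb (z:R): 1/2 <= z -> Rabs (ln z) <= 2 * Rabs (z-1).
Proof.
  intros hz.
  assert (h1: ln z <= z - 1). { pose proof (exp_ineq1_le (ln z)). rewrite exp_ln in H; lra. }
  assert (h2: ln (/z) <= /z - 1). { pose proof (exp_ineq1_le (ln (/z))). rewrite exp_ln in H. lra. apply Rinv_0_lt_compat; lra. }
  rewrite ln_Rinv in h2 by lra.
  assert (/z <= 2). { replace 2 with (/(1/2)) by field. apply Rinv_le_contravar; lra. }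
  assert (/z - 1 = (1 - z) / z) by (field; lra).
  unfold Rabs; destruct (Rcase_abs (ln z)); destruct (Rcase_abs (z-1)); try nra.
Qed.
Definition GB (q:R) (t:nat->R) := exists N C, forall n, (N<=n)%nat -> Rabs (t n) <= C*q^n.
Definition jt q (f:R->R) y n := (1-q)*q^n*y*f(q^n*y).

Lemma powle1 (q:R) n: 0<=q<=1 -> q^n <= 1.
Proof. intros h. induction n; simpl. lra. assert (0<=q^n) by (apply pow_le; lra). nra. Qed.

Lemma smallq (q e:R): 0<q<1 -> 0<e -> exists N, forall n, (N<=n)%nat -> q^n < e.
Proof. intros hq he. destruct (pow_lt_1_zero q) with e as [N HN]. rewrite Rabs_pos_eq; lra. auto.
  exists N. intros n hn. specialize (HN n hn). rewrite Rabs_pos_eq in HN; auto. apply pow_le; lra. Qed.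

Lemma inI_q (q:R) b y n: 0<q<1 -> inI b y -> inI b (q^n*y).
Proof. intros hq [h1 h2]. assert (0<=q^n<=1). { split. apply pow_le; lra. apply powle1; lra. }
  split. nra. eapply Rbar_le_lt_trans; [|exact h2]. simpl. nra. Qed.

Lemma u0bnd q b u0 (hq: 0<q<1) (hb: Rbar_lt 0 b)
  (hc0: filterlim u0 (within (inI b) (locally 0)) (locally (u0 0))) y (hy: inI b y):
  exists N, forall n, (N<=n)%nat -> Rabs (u0 (q^n*y)) <= Rabs (u0 0) + 1.
Proof.
  assert (H := hc0 (ball (u0 0) (mkposreal 1 Rlt_0_1)) (locally_ball _ _)).
  destruct H as [eps Heps].
  destruct hy as [hy0 hy1].
  destruct (smallq q (eps/(y+1)) hq) as [N HN]. apply Rdiv_lt_0_compat; [apply cond_pos|lra].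
  exists N. intros n hn. specialize (HN n hn).
  assert (hqn: 0 <= q^n) by (apply pow_le; lra).
  assert (B: ball (u0 0) (mkposreal 1 Rlt_0_1) (u0 (q^n*y))).
  { apply Heps. 2: apply inI_q; auto; split; auto.
    change (Rabs (q^n*y - 0) < eps). rewrite Rminus_0_r, Rabs_pos_eq by nra.
    apply Rmult_lt_compat_r with (r := y+1) in HN; [|lra].
    unfold Rdiv in HN. rewrite Rmult_assoc, Rinv_l in HN by lra. pose proof (cond_pos eps). nra. }
  change (Rabs (u0 (q^n*y) - u0 0) < 1) in B.
  pose proof (Rabs_triang_inv (u0 (q^n*y)) (u0 0)). lra.
Qed.

Lemma half q z: 0<q<1 -> (exists N K, forall n, (N<=n)%nat -> Rabs (z n - 1) <= K*q^n) ->
  exists N, forall n, (N<=n)%nat -> 1/2 <= z n.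
Proof.
  intros hq [N [K H]].
  destruct (smallq q (1/(2*Rabs K + 2)) hq) as [N2 H2].
  { pose proof (Rabs_pos K). apply Rdiv_lt_0_compat; lra. }
  exists (N+N2)%nat. intros n hn.
  specialize (H n ltac:(lia)). specialize (H2 n ltac:(lia)).
  pose proof (Rabs_pos K). pose proof (Rle_abs K). assert (0<=q^n) by (apply pow_le; lra).
  apply Rmult_lt_compat_r with (r := 2*Rabs K+2) in H2; [|lra].
  unfold Rdiv in H2. rewrite Rmult_1_l, Rinv_l in H2 by lra.
  assert (K*q^n <= Rabs K * q^n) by nra.
  assert (HH: Rabs (z n - 1) < 1/2) by nra.
  apply Rabs_def2 in HH. lra.
Qed.

Lemma GB_ext q s t: (forall n, t n = s n) -> GB q s -> GB q t.
Proof. intros e [N [C H]]. exists N, C. intros n hn. rewrite e. auto. Qed.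

Lemma GB_scal q s a: GB q s -> GB q (fun n => a * s n).
Proof. intros [N [C H]]. exists N, (Rabs a * C). intros n hn. rewrite Rabs_mult, Rmult_assoc.
  apply Rmult_le_compat_l. apply Rabs_pos. auto. Qed.

Lemma GB_minus q s t: GB q s -> GB q t -> GB q (fun n => s n - t n).
Proof. intros [N [C H]] [N' [C' H']]. exists (N+N')%nat, (C+C'). intros n hn.
  specialize (H n ltac:(lia)). specialize (H' n ltac:(lia)).
  eapply Rle_trans. apply Rabs_triang. rewrite Rabs_Ropp. lra. Qed.

Lemma ex_log q z: 0<q<1 -> (forall n, 0 < z n) ->
  (exists N K, forall n, (N<=n)%nat -> Rabs (z n - 1) <= K*q^n) -> GB q (fun n => ln (z n)).
Proof.
  intros hq hz H. destruct (half q z hq H) as [N1 H1]. destruct H as [N [K H]].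
  exists (N+N1)%nat, (2*K). intros n hn.
  eapply Rle_trans. apply lnb. apply H1; lia. specialize (H n ltac:(lia)). lra.
Qed.

Lemma ev_a q b u0 (hq: 0<q<1) (hb: Rbar_lt 0 b)
  (hc0: filterlim u0 (within (inI b) (locally 0)) (locally (u0 0))) y (hy: inI b y):
  exists N K, forall n, (N<=n)%nat ->
    Rabs ((1 - (1-q)*(q^n*y)*u0 (q^n*y)) - 1) <= K*q^n.
Proof.
  destruct (u0bnd q b u0 hq hb hc0 y hy) as [N H]. exists N, ((1-q)*y*(Rabs (u0 0) + 1)).
  intros n hn. specialize (H n hn). destruct hy as [hy _].
  assert (0<=q^n) by (apply pow_le; lra).
  replace (1 - (1-q)*(q^n*y)*u0 (q^n*y) - 1) with (- (((1-q)*y*q^n) * u0 (q^n*y))) by ring.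
  rewrite Rabs_Ropp, Rabs_mult, (Rabs_pos_eq ((1-q)*y*q^n)).
  2: { apply Rmult_le_pos; [|auto]. apply Rmult_le_pos; lra. }
  assert (0 <= (1-q)*y*q^n) by (apply Rmult_le_pos; [apply Rmult_le_pos|]; lra).
  replace ((1-q)*y*(Rabs (u0 0) + 1)*q^n) with (((1-q)*y*q^n)*(Rabs (u0 0) + 1)) by ring.
  apply Rmult_le_compat_l; auto.
Qed.

Lemma ev_c q b u0 (hq: 0<q<1) (hb: Rbar_lt 0 b)
  (hc0: filterlim u0 (within (inI b) (locally 0)) (locally (u0 0))) y (hy: inI b y):
  exists N K, forall n, (N<=n)%nat ->
    Rabs ((1 + (1-q)*(q^n*y)*u0 (q*(q^n*y))) - 1) <= K*q^n.
Proof.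
  destruct (u0bnd q b u0 hq hb hc0 y hy) as [N H]. exists N, ((1-q)*y*(Rabs (u0 0) + 1)).
  intros n hn. specialize (H (S n) ltac:(lia)). simpl in H. rewrite Rmult_assoc in H. destruct hy as [hy _].
  assert (0<=q^n) by (apply pow_le; lra).
  replace (1 + (1-q)*(q^n*y)*u0 (q*(q^n*y)) - 1) with ((((1-q)*y*q^n) * u0 (q*(q^n*y)))) by ring.
  rewrite Rabs_mult, (Rabs_pos_eq ((1-q)*y*q^n)).
  2: { apply Rmult_le_pos; [|auto]. apply Rmult_le_pos; lra. }
  assert (0 <= (1-q)*y*q^n) by (apply Rmult_le_pos; [apply Rmult_le_pos|]; lra).
  replace ((1-q)*y*(Rabs (u0 0) + 1)*q^n) with (((1-q)*y*q^n)*(Rabs (u0 0) + 1)) by ring.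
  apply Rmult_le_compat_l; auto.
Qed.

Definition f1 q (u0:R->R) := fun t => ln (1 - (1 - q) * t * u0 t) / t.
Definition hh q (u0:R->R) := fun s => 1 / s *
               ln ((1 - (1 - q) * s * u0 s) / (1 + (1 - q) * s * u0 (q * s))).
Definition gg q u0 := fun t => 1 / (1 - (1 - q) * t * u0 t) *
        exp (1 / (1 - q) * jackson q (hh q u0) t).

Lemma psi_eq q u0 D F x : psi q u0 D F x =
  exp (- (1 / (1 - q)) * jackson q (f1 q u0) x) * (D + F * jackson q (gg q u0) x).
Proof. reflexivity. Qed.

Lemma S1 q b u0 (hq: 0<q<1) (hb: Rbar_lt 0 b)
  (hc0: filterlim u0 (within (inI b) (locally 0)) (locally (u0 0)))
  (hpos1 : forall t, inI b t -> 1 - (1 - q) * t * u0 t > 0)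
  y (hy: inI b y) (hy0: 0 < y) : GB q (jt q (f1 q u0) y).
Proof.
  apply GB_ext with (fun n => (1-q) * ln (1 - (1-q)*(q^n*y)*u0 (q^n*y))).
  { intros n. unfold jt, f1. assert (0<q^n) by (apply pow_lt; lra). field. split; lra. }
  apply GB_scal. apply ex_log; auto.
  - intros n. apply hpos1. apply inI_q; auto.
  - apply (ev_a q b u0 hq hb hc0 y hy).
Qed.

Lemma S2 q b u0 (hq: 0<q<1) (hb: Rbar_lt 0 b)
  (hc0: filterlim u0 (within (inI b) (locally 0)) (locally (u0 0)))
  (hpos1 : forall t, inI b t -> 1 - (1 - q) * t * u0 t > 0)
  (hpos2 : forall t, inI b t -> 1 + (1 - q) * t * u0 (q * t) > 0)
  y (hy: inI b y) (hy0: 0 < y) : GB q (jt q (hh q u0) y).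
Proof.
  apply GB_ext with (fun n => (1-q) * (ln (1 - (1-q)*(q^n*y)*u0 (q^n*y))
                                     - ln (1 + (1-q)*(q^n*y)*u0 (q*(q^n*y))))).
  { intros n. unfold jt, hh. assert (0<q^n) by (apply pow_lt; lra).
    rewrite ln_div. field. split; lra.
    apply hpos1, inI_q; auto. apply hpos2, inI_q; auto. }
  apply GB_scal. apply GB_minus; apply ex_log; auto.
  - intros n. apply hpos1. apply inI_q; auto.
  - apply (ev_a q b u0 hq hb hc0 y hy).
  - intros n. apply hpos2. apply inI_q; auto.
  - apply (ev_c q b u0 hq hb hc0 y hy).
Qed.

Lemma expmono x y : x <= y -> exp x <= exp y.
Proof. intros [h|h]. left. apply exp_increasing; auto. subst; lra. Qed.

Lemma S3 q b u0 (hq: 0<q<1) (hb: Rbar_lt 0 b)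
  (hc0: filterlim u0 (within (inI b) (locally 0)) (locally (u0 0)))
  (hpos1 : forall t, inI b t -> 1 - (1 - q) * t * u0 t > 0)
  (hpos2 : forall t, inI b t -> 1 + (1 - q) * t * u0 (q * t) > 0)
  y (hy: inI b y) (hy0: 0 < y) : GB q (jt q (gg q u0) y).
Proof.
  destruct (S2 q b u0 hq hb hc0 hpos1 hpos2 y hy hy0) as [N [C HC]].
  destruct (half q (fun n => 1 - (1-q)*(q^n*y)*u0 (q^n*y)) hq (ev_a q b u0 hq hb hc0 y hy)) as [N1 H1].
  set (Mw := exp (Rabs C / (1-q) / (1-q))).
  exists (N+N1)%nat, ((1-q)*y*(2*Mw)). intros n hn.
  specialize (H1 n ltac:(lia)). simpl in H1.
  assert (hqn: 0<q^n) by (apply pow_lt; lra).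
  assert (HJ: Rabs (jackson q (hh q u0) (q^n*y)) <= Rabs C / (1-q)).
  { unfold jackson.
    rewrite (Series_ext _ (fun k => jt q (hh q u0) y (n+k))).
    2: { intros k. unfold jt. replace (q^k*(q^n*y)) with (q^(n+k)*y) by (rewrite pow_add; ring).
         rewrite pow_add. ring. }
    eapply Rle_trans. apply (tailb q (C*q^n)); auto.
    intros k. rewrite Rmult_assoc, <- pow_add. apply HC. lia.
    unfold Rdiv. apply Rmult_le_compat_r. apply Rlt_le, Rinv_0_lt_compat; lra.
    pose proof (Rle_abs C). pose proof (Rabs_pos C). pose proof (powle1 q n ltac:(lra)). nra. }
  assert (HW: exp (1 / (1 - q) * jackson q (hh q u0) (q^n*y)) <= Mw).
  { unfold Mw. apply expmono. apply Rabs_le_between in HJ.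
    assert (0 < / (1-q)) by (apply Rinv_0_lt_compat; lra).
    unfold Rdiv in *. rewrite Rmult_1_l. nra. }
  pose proof (exp_pos (1 / (1 - q) * jackson q (hh q u0) (q^n*y))) as HWp.
  unfold jt, gg.
  set (A := 1 - (1 - q) * (q ^ n * y) * u0 (q ^ n * y)) in *.
  set (W := exp (1 / (1 - q) * jackson q (hh q u0) (q^n*y))) in *.
  assert (hA: 0 < 1/A <= 2). { split. apply Rdiv_lt_0_compat; lra.
    apply (Rmult_le_reg_r A). lra. unfold Rdiv. rewrite Rmult_assoc, Rinv_l by lra. lra. }
  rewrite Rabs_pos_eq.
  2: { apply Rmult_le_pos. apply Rmult_le_pos. apply Rmult_le_pos. lra. lra. lra. nra. }
  replace ((1-q)*y*(2*Mw)*q^n) with (((1-q)*q^n*y)*(2*Mw)) by ring.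
  apply Rmult_le_compat_l. apply Rmult_le_pos. apply Rmult_le_pos; lra. lra.
  apply Rmult_le_compat; lra.
Qed.

Lemma jshift q f y : ex_series (fun n => (1-q)*q^n*y*f(q^n*y)) ->
  jackson q f y - jackson q f (q*y) = (1-q)*y*f y.
Proof.
  intros H. unfold jackson. rewrite Series_incr_1 by auto.
  rewrite (Series_ext (fun n => (1-q)*q^n*(q*y)*f(q^n*(q*y)))
             (fun k => (1-q)*q^(S k)*y*f(q^(S k)*y))).
  simpl. rewrite !Rmult_1_l, Rmult_1_r. ring.
  intros k. replace (q^k*(q*y)) with (q^(S k)*y) by (simpl; ring). simpl; ring.
Qed.

Lemma S0 : Series (fun _:nat => 0) = 0.
Proof. rewrite (Series_ext _ (fun n:nat => 0 * 1)) by (intros; ring).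
  rewrite (Series_scal_l 0 (fun _ => 1)). ring. Qed.

Theorem corollary1 (q : R) (b : Rbar) (u0 : R -> R)
  (hq : 0 < q < 1) (hb : Rbar_lt 0 b)
  (hcont : forall t, inI b t ->
     filterlim u0 (within (inI b) (locally t)) (locally (u0 t)))
  (hpos1 : forall t, inI b t -> 1 - (1 - q) * t * u0 t > 0)
  (hpos2 : forall t, inI b t -> 1 + (1 - q) * t * u0 (q * t) > 0)
  (D F : R) :
  (forall x, inI b x -> x <> 0 ->
     - dq q (dq q (psi q u0 D F)) x + Vpot q u0 x * psi q u0 D F x = 0)
  /\ psi q u0 D F 0 = D.
Proof.
  assert (hI0: inI b 0) by (split; [lra| exact hb]).
  assert (hc0 := hcont 0 hI0).
  assert (Iq: forall y, inI b y -> inI b (q*y)).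
  { intros y hy. pose proof (inI_q q b y 1 hq hy). simpl in H. rewrite Rmult_1_r in H. exact H. }
  assert (EA: forall y, inI b y -> 0 < y ->
    exp (-(1/(1-q)) * jackson q (f1 q u0) (q*y)) =
    (1 - (1-q)*y*u0 y) * exp (-(1/(1-q)) * jackson q (f1 q u0) y)).
  { intros y hy hy0. pose proof (jshift q (f1 q u0) y (gb q _ hq (S1 q b u0 hq hb hc0 hpos1 y hy hy0))) as s.
    unfold f1 at 3 in s. pose proof (hpos1 y hy).
    replace (-(1/(1-q)) * jackson q (f1 q u0) (q*y)) with
      (ln (1 - (1-q)*y*u0 y) + -(1/(1-q)) * jackson q (f1 q u0) y).
    rewrite exp_plus, exp_ln by lra. ring.
    replace (jackson q (f1 q u0) (q*y)) with
      (jackson q (f1 q u0) y - (1 - q) * y * (ln (1 - (1 - q) * y * u0 y) / y)) by lra.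
    field. split; lra. }
  assert (WA: forall y, inI b y -> 0 < y ->
    exp (1/(1-q) * jackson q (hh q u0) (q*y)) =
    exp (1/(1-q) * jackson q (hh q u0) y) * (1 + (1-q)*y*u0 (q*y)) / (1 - (1-q)*y*u0 y)).
  { intros y hy hy0. pose proof (jshift q (hh q u0) y (gb q _ hq (S2 q b u0 hq hb hc0 hpos1 hpos2 y hy hy0))) as s.
    unfold hh at 3 in s. pose proof (hpos1 y hy). pose proof (hpos2 y hy).
    replace (1/(1-q) * jackson q (hh q u0) y) with
      (1/(1-q) * jackson q (hh q u0) (q*y) + ln ((1 - (1-q)*y*u0 y)/(1 + (1-q)*y*u0 (q*y)))).
    rewrite exp_plus, exp_ln. field. split; lra. apply Rdiv_lt_0_compat; lra.
    replace (jackson q (hh q u0) y) with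
      (jackson q (hh q u0) (q*y) + (1 - q) * y * (1 / y * ln ((1 - (1 - q) * y * u0 y) / (1 + (1 - q) * y * u0 (q * y))))) by lra.
    field. split; lra. }
  assert (GA: forall y, inI b y -> 0 < y ->
    jackson q (gg q u0) (q*y) = jackson q (gg q u0) y - (1-q)*y*gg q u0 y).
  { intros y hy hy0. pose proof (jshift q (gg q u0) y (gb q _ hq (S3 q b u0 hq hb hc0 hpos1 hpos2 y hy hy0))) as s.
    lra. }
  split.
  - intros x hx hx0. assert (hxp: 0 < x) by (destruct hx; lra).
    assert (hqx: inI b (q*x)) by auto. assert (hqxp: 0 < q*x) by nra.
    pose proof (hpos1 x hx) as ha0. pose proof (hpos1 (q*x) hqx) as ha1.
    unfold dq, Vpot, dq. rewrite !psi_eq.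
    rewrite (EA (q*x) hqx hqxp), (EA x hx hxp), (GA (q*x) hqx hqxp), (GA x hx hxp).
    assert (gq: gg q u0 (q*x) = 1/(1-(1-q)*(q*x)*u0(q*x)) *
       (exp (1/(1-q) * jackson q (hh q u0) x) * (1 + (1-q)*x*u0 (q*x)) / (1 - (1-q)*x*u0 x))).
    { unfold gg at 1. rewrite (WA x hx hxp). reflexivity. }
    rewrite gq.
    set (E0 := exp (-(1/(1-q)) * jackson q (f1 q u0) x)).
    set (W0 := exp (1/(1-q) * jackson q (hh q u0) x)).
    set (G0 := jackson q (gg q u0) x).
    change (jackson q (fun t : R => 1 / (1 - (1 - q) * t * u0 t) * exp (1 / (1 - q) * jackson q (hh q u0) t)) x) with G0.
    assert (gx: gg q u0 x = 1/(1-(1-q)*x*u0 x)*W0) by reflexivity. rewrite gx.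
    field. repeat split; lra.
  - rewrite psi_eq. unfold jackson.
    rewrite (Series_ext _ (fun _ => 0)) by (intros; ring).
    rewrite (Series_ext (fun n => (1 - q) * q ^ n * 0 * gg q u0 (q ^ n * 0)) (fun _ => 0)) by (intros; ring).
    rewrite S0, Rmult_0_r, exp_0. ring.
Qed.
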